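(* Fix a constant $0<\alpha<1$. For $D\le \alpha n$, the minimum size of advice sufficient to perform topology recognition in time $D$ in the class of graphs of size $n$ and diameter $D$ is in $\Theta(n\log n)$ (the upper bound holds for labeled topology recognition and the lower bound for anonymous topology recognition), with constants depending only on $\alpha$.
   Context: Graphs are finite, simple, undirected, connected, with no node labels; at each node of degree $d$ the incident edges carry distinct port numbers $0,\dots,d-1$ (no coherence between endpoints). Isomorphism is a bijection of nodes preserving edges and port numbers at both endpoints. Size = number of nodes; $\log$ is base 2. Communication model (LOCAL): synchronous rounds, all nodes start simultaneously; in each round every node may send arbitrary messages to all neighbours, receives their messages (knowing the arrival port), and performs arbitrary local computation. Initially a node knows only its degree and its advice. Advice: an oracle knowing the graph assigns each node a binary string; the size of advice is the maximum string length. All nodes run the same deterministic algorithm. Anonymous topology recognition: every node outputs a port-labeled graph isomorphic to $G$. Labeled topology recognition: all nodes output the same port-labeled graph $H$ with distinct node labels and each node its own label, such that some isomorphism $G\to H$ maps every node to the node carrying the label it output. The minimum size of advice sufficient for time $T$ on a class is the least $s$ such that some deterministic algorithm and, for each graph of the class, some advice assignment of size at most $s$ accomplish the task within $T$ rounds on every graph of the class. *)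

(* Defs.v *)
From Stdlib Require Import Reals.
From mathcomp Require Import all_boot.

Set Implicit Arguments.
Unset Strict Implicit.
Unset Printing Implicit Defensive.

(* A graph on nodes 0..n-1 is a list of n adjacency lists: the list    *)
(* [nbr G v] enumerates the neighbours of v, and the neighbour at      *)
(* position p is the one reached through port p of v.  Thus the degree *)
Definition pgraph := seq (seq nat).

Definition gsize (G : pgraph) : nat := size G.
Definition nbr (G : pgraph) (v : nat) : seq nat := nth [::] G v.
Definition deg (G : pgraph) (v : nat) : nat := size (nbr G v).

Fixpoint within (G : pgraph) (u v : nat) (k : nat) : bool :=
  match k with
  | 0 => u == v
  | k'.+1 => within G u v k' || has (fun w => within G w v k') (nbr G u)
  end.

Definition connected (G : pgraph) : Prop :=
  exists k, forall u v, u < gsize G -> v < gsize G -> within G u v k.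

Definition wf_pgraph (G : pgraph) : Prop :=
  (forall v, v < gsize G ->
     [/\ all (fun u => u < gsize G) (nbr G v),
         uniq (nbr G v),
         v \notin nbr G v &
         forall u, u < gsize G -> (u \in nbr G v) = (v \in nbr G u)])
  /\ connected G.

Definition has_diameter (G : pgraph) (D : nat) : Prop :=
  (forall u v, u < gsize G -> v < gsize G -> within G u v D) /\
  (forall D', D' < D ->
     exists u v, [/\ u < gsize G, v < gsize G & ~~ within G u v D']).

Definition in_class (n D : nat) (G : pgraph) : Prop :=
  [/\ wf_pgraph G, gsize G = n & has_diameter G D].

Definition iso_map (G H : pgraph) (f : nat -> nat) : Prop :=
  [/\ gsize G = gsize H,
      forall v, v < gsize G -> f v < gsize H,
      forall u v, u < gsize G -> v < gsize G -> f u = f v -> u = v &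
      forall v, v < gsize G -> map f (nbr G v) = nbr H (f v)].

Definition isomorphic (G H : pgraph) : Prop := exists f, iso_map G H f.

(* A deterministic algorithm (the same at every node): arbitrary state *)
(* and message types; the initial state depends only on the degree and *)
(* the advice string; in each round a node sends on each port p the    *)
(* message [send s p], then receives the list of messages indexed by   *)
(* arrival port and computes its new state.  [out s = Some o] means     *)
(* the node outputs o (its first such output counts).                  *)
Record algo (Out : Type) := Algo {
  St : Type;
  Msg : Type;
  init : nat -> seq bool -> St;
  send : St -> nat -> Msg;
  recv : St -> seq Msg -> St;
  out : St -> option Out
}.

Arguments St {Out} a.
Arguments Msg {Out} a.
Arguments init {Out} a _ _.
Arguments send {Out} a _ _.
Arguments recv {Out} a _ _.
Arguments out {Out} a _.

Definition advice := nat -> seq bool.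

Fixpoint state (Out : Type) (A : algo Out) (G : pgraph) (adv : advice) (r v : nat)
  : St A :=
  match r with
  | 0 => init A (deg G v) (adv v)
  | r'.+1 =>
      recv A (state A G adv r' v)
        [seq send A (state A G adv r' u) (index v (nbr G u)) | u <- nbr G v]
  end.

Definition outputs_within Out (A : algo Out) G adv (T v : nat) (o : Out)
  : Prop :=
  exists r, [/\ r <= T, out A (state A G adv r v) = Some o &
                forall r', r' < r -> out A (state A G adv r' v) = None].

Definition advice_size_le (G : pgraph) (adv : advice) (s : nat) : Prop :=
  forall v, v < gsize G -> size (adv v) <= s.

Definition solves_anon (A : algo pgraph) G adv (T : nat) : Prop :=
  forall v, v < gsize G ->
    exists H, outputs_within A G adv T v H /\ isomorphic G H.

(* Labeled topology recognition: all nodes output the same graph H with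
   distinct node labels (label of node i of H is [nth 0 lab i]) and each
   node its own label, consistently with some isomorphism G -> H. *)
Definition solves_lab (A : algo ((pgraph * seq nat) * nat)) G adv (T : nat)
  : Prop :=
  exists (H : pgraph) (lab : seq nat) (f : nat -> nat),
    [/\ size lab = gsize H, uniq lab, iso_map G H f &
        forall v, v < gsize G ->
          outputs_within A G adv T v ((H, lab), nth 0 lab (f v))].

Definition sufficient_anon (n D T s : nat) : Prop :=
  exists A : algo pgraph, forall G, in_class n D G ->
    exists adv, advice_size_le G adv s /\ solves_anon A G adv T.

Definition sufficient_lab (n D T s : nat) : Prop :=
  exists A : algo ((pgraph * seq nat) * nat), forall G, in_class n D G ->
    exists adv, advice_size_le G adv s /\ solves_lab A G adv T.

Definition nlogn (n : nat) : R := Rmult (INR n) (Rdiv (ln (INR n)) (ln 2)).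

(* Main.v *)
Require Import Defs.
From Stdlib Require Import Reals Lra Lia ZArith.
From mathcomp Require Import all_boot zify.
Set Implicit Arguments.
Unset Strict Implicit.


Lemma within_mono G u v k k' : (k <= k')%N -> within G u v k -> within G u v k'.
Proof.
move=> /subnK <-; elim: (k' - k)%N => [//|d IH] H.
by rewrite addSn /= IH.
Qed.

Lemma within_ext G v u w k : within G v u k -> w \in nbr G u -> within G v w k.+1.
Proof.
elim: k v => [|k IH] v /=.
  move/eqP=> -> Hw; apply/orP; right; apply/hasP; exists w => //.
move=> /orP [H|/hasP [x Hx Hxu]] Hw.
  by have := IH v H Hw => /= ->.
apply/orP; right; apply/hasP; exists x => //.
exact: IH.
Qed.

Lemma within_refl G v k : within G v v k.
Proof. by apply: (@within_mono G v v 0 k) => //=. Qed.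

Lemma within_trans G a b c k1 k2 :
  within G a b k1 -> within G b c k2 -> within G a c (k1 + k2).
Proof.
elim: k1 a => [|k1 IH] a /=.
  by move/eqP=> ->.
move=> /orP [H|/hasP [x Hx Hxb]] Hbc.
  by rewrite IH.
apply/orP; right; apply/hasP; exists x => //; exact: IH.
Qed.

Lemma within1 G a b : b \in nbr G a -> within G a b 1.
Proof. by move=> H /=; apply/orP; right; apply/hasP; exists b => //=. Qed.

Lemma within_lt G u v k : (v < gsize G)%N -> within G u v k -> (u < gsize G)%N.
Proof.
elim: k u => [|k IH] u /=; first by move=> Hv /eqP ->.
move=> Hv /orP [H|/hasP [x Hx _]]; first exact: IH.
case: (ltnP u (gsize G)) => // Hu.
by rewrite /nbr nth_default in Hx.
Qed.

Section Locality.
Variables (Out : Type) (A : algo Out) (G G' : pgraph) (adv adv' : advice) (v Dd : nat).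
Hypothesis Hn : forall u, within G v u Dd.-1 -> nbr G u = nbr G' u.
Hypothesis Hd : forall u, within G v u Dd -> deg G u = deg G' u.
Hypothesis Ha : forall u, within G v u Dd -> adv u = adv' u.
Hypothesis Hi : forall u w, within G v u Dd.-1 -> w \in nbr G u ->
  index u (nbr G w) = index u (nbr G' w).

Lemma locality_gen r : (r <= Dd)%N -> forall u, within G v u (Dd - r) ->
  state A G adv r u = state A G' adv' r u.
Proof.
elim: r => [|r IH] Hr u Hu /=.
  by rewrite subn0 in Hu; rewrite Hd // Ha.
have Hu1 : within G v u Dd.-1 by apply: within_mono Hu; lia.
rewrite -Hn // IH; last first.
  by apply: within_mono Hu; lia.
  by lia.
congr (recv A _ _); apply/eq_in_map => w Hw.
rewrite IH; last first.
  have := @within_ext G v u w _ Hu Hw; apply: within_mono; lia.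
  lia.
by rewrite Hi.
Qed.

Lemma locality r : (r <= Dd)%N -> state A G adv r v = state A G' adv' r v.
Proof. move=> Hr; apply: locality_gen => //; exact: within_refl. Qed.
End Locality.

Lemma outputs_det Out (A : algo Out) G G' adv adv' T v o o' :
  (forall r, (r <= T)%N -> out A (state A G adv r v) = out A (state A G' adv' r v)) ->
  outputs_within A G adv T v o -> outputs_within A G' adv' T v o' -> o = o'.
Proof.
move=> E [r1 [H1 O1 N1]] [r2 [H2 O2 N2]].
case: (ltngtP r1 r2) => [lt|lt|eq].
- by move: (N2 _ lt); rewrite -E ?O1 //; lia.
- by move: (N1 _ lt); rewrite E ?O2 //; lia.
- by subst; rewrite E // O2 in O1; case: O1.
Qed.

Fixpoint bits (w k : nat) : seq bool :=
  if w is w'.+1 then odd k :: bits w' k./2 else [::].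
Fixpoint bval (bs : seq bool) : nat :=
  if bs is b :: bs' then (b + (bval bs').*2)%N else 0%N.

Lemma size_bits w k : size (bits w k) = w.
Proof. by elim: w k => //= w IH k; rewrite IH. Qed.

Lemma bvalK w k : (k < 2 ^ w)%N -> bval (bits w k) = k.
Proof.
elim: w k => [|w IH] k /=; first by rewrite expn0; lia.
move=> Hk; rewrite IH; first by rewrite addnC -[in RHS](odd_double_half k) addnC.
rewrite expnS in Hk.
have := odd_double_half k. lia.
Qed.

Fixpoint dchunks (w fuel : nat) (bs : seq bool) : seq nat :=
  if fuel is f.+1 then
    (if bs is [::] then [::] else bval (take w bs) :: dchunks w f (drop w bs))
  else [::].

Lemma dchunksK w xs fuel : (0 < w)%N -> (size xs <= fuel)%N ->
  all (fun x => x < 2 ^ w)%N xs ->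
  dchunks w fuel (flatten (map (bits w) xs)) = xs.
Proof.
move=> Hw; elim: xs fuel => [|x xs IH] [|f] //=.
move=> Hs /andP [Hx Ha].
have Hne : bits w x ++ flatten [seq bits w i | i <- xs] <> [::].
  by move/(congr1 size); rewrite size_cat size_bits /=; lia.
case E: (bits w x ++ _) => [|b l]; first by [].
rewrite -E.
have Sz : size (bits w x) = w by rewrite size_bits.
rewrite -{1}Sz take_size_cat // -{2}Sz drop_size_cat // bvalK // Sz IH //; lia.
Qed.

Definition enc (w : nat) (xs : seq nat) : seq bool :=
  nseq w true ++ false :: flatten (map (bits w) xs).

Definition dec (bs : seq bool) : seq nat :=
  let w := find negb bs in dchunks w (size bs) (drop w.+1 bs).

Lemma size_flatten_bits w xs : size (flatten (map (bits w) xs)) = (w * size xs)%N.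
Proof. elim: xs => [|x xs IH] /=; first by rewrite muln0. by rewrite size_cat IH size_bits mulnS. Qed.

Lemma size_enc w xs : size (enc w xs) = (w + 1 + w * size xs)%N.
Proof. by rewrite /enc size_cat size_nseq /= size_flatten_bits; lia. Qed.

Lemma decK w xs : (0 < w)%N -> all (fun x => x < 2 ^ w)%N xs -> dec (enc w xs) = xs.
Proof.
move=> Hw Ha; rewrite /dec /enc.
have -> : find negb (nseq w true ++ false :: flatten [seq bits w i | i <- xs]) = w.
  rewrite find_cat has_nseq /= find_nseq /= andbF addn0; exact: size_nseq.
have E : forall (k : nat) (l : seq bool), drop k.+1 (nseq k true ++ false :: l) = l.
  move=> k l; elim: k => [|k IH]; first exact: drop0.
  by rewrite /= IH.
rewrite E.
apply: dchunksK => //.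
rewrite size_cat size_nseq /= size_flatten_bits.
nia.
Qed.

Record lst := LSt { rnd : nat; own : seq nat; kn : seq (nat * seq nat) }.

Definition lookup (i : nat) (K : seq (nat * seq nat)) : seq nat :=
  (nth (0%N, [::]) K (find (fun p => p.1 == i) K)).2.

Definition LA : algo ((pgraph * seq nat) * nat) :=
  @Algo _ lst (seq (nat * seq nat))
    (fun d a => let xs := dec a in LSt 0 xs [:: (nth 0%N xs 2, drop 3 xs)])
    (fun s p => kn s)
    (fun s ms => LSt (rnd s).+1 (own s) (kn s ++ flatten ms))
    (fun s => if rnd s == nth 0%N (own s) 1 then
       Some ((map (fun i => lookup i (kn s)) (iota 0 (nth 0%N (own s) 0)),
              iota 0 (nth 0%N (own s) 0)), nth 0%N (own s) 2)
     else None).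

Definition wl (n : nat) := (trunc_log 2 n).+1.
Definition advL (n D : nat) (G : pgraph) : advice :=
  fun v => enc (wl n) ([:: n; D; v] ++ nbr G v).

Section UB.
Variables (G : pgraph) (n D : nat).
Hypothesis Hsz : gsize G = n.
Hypothesis Hall : forall v, (v < n)%N -> all (fun u => u < n)%N (nbr G v).
Hypothesis HD : (D <= n)%N.

Lemma n_lt_w : (n < 2 ^ wl n)%N.
Proof. exact: trunc_log_ltn. Qed.

Lemma dec_adv v : (v < n)%N -> dec (advL n D G v) = [:: n; D; v] ++ nbr G v.
Proof.
move=> Hv; apply: decK => //.
have Hn := n_lt_w.
rewrite /=; apply/andP; split; first lia.
apply/andP; split; first lia.
apply/andP; split; first lia.
by apply/allP => u /(allP (Hall Hv)) /=; lia.
Qed.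

Lemma invL r v : (v < n)%N ->
  let s := state LA G (advL n D G) r v in
  [/\ rnd s = r, own s = [:: n; D; v] ++ nbr G v,
      (forall p, p \in kn s -> (p.1 < n)%N /\ p.2 = nbr G p.1) &
      (forall u, within G v u r -> has (fun p => p.1 == u) (kn s))].
Proof.
elim: r v => [|r IH] v Hv /=.
  rewrite dec_adv //=; split => //.
    by move=> p; rewrite inE drop0 => /eqP -> /=.
  by move=> u ->.
have [R1 O1 S1 C1] := IH v Hv.
split.
- by rewrite R1.
- by [].
- move=> p; rewrite mem_cat => /orP [/S1 //|/flattenP [l /mapP [w Hw ->] Hp]].
  have Hwn : (w < n)%N by have := allP (Hall Hv) w Hw.
  by have [_ _ S2 _] := IH w Hwn; apply: S2.
- move=> u /orP [/C1 H|/hasP [w Hw Hwu]]; first by rewrite has_cat H.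
  have Hwn : (w < n)%N by have := allP (Hall Hv) w Hw.
  have [_ _ _ C2] := IH w Hwn.
  have /hasP [p Hp Hpu] := C2 u Hwu.
  rewrite has_cat; apply/orP; right; apply/hasP; exists p => //.
  by apply/flattenP; exists (kn (state LA G (advL n D G) r w)) => //; apply/mapP; exists w.
Qed.

Lemma lookupP u K : has (fun p => p.1 == u) K ->
  (forall p, p \in K -> p.2 = nbr G p.1) -> lookup u K = nbr G u.
Proof.
move=> Hh HK; rewrite /lookup.
have Hl := nth_find (0%N, [::]) Hh.
rewrite HK; first by rewrite (eqP Hl).
by apply: mem_nth; rewrite -has_find.
Qed.

Hypothesis Hdiam : forall u v, (u < n)%N -> (v < n)%N -> within G u v D.

Lemma solvesL : solves_lab LA G (advL n D G) D.
Proof.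
exists G, (iota 0 n), id; split.
- by rewrite size_iota.
- exact: iota_uniq.
- by split => // v _; rewrite map_id.
- move=> v Hv; rewrite Hsz in Hv; exists D; split => //.
  + have [R1 O1 S1 C1] := invL D Hv.
    rewrite /= R1 O1 /= eqxx nth_iota //=.
    congr (Some (_, _, _)).
    apply: (@eq_from_nth _ [::]); first by rewrite size_map size_iota.
    move=> i; rewrite size_map size_iota => Hi.
    rewrite (nth_map 0%N) ?size_iota // nth_iota // add0n.
    apply: lookupP; first by apply: C1; apply: Hdiam.
    by move=> p /S1 [].
  + move=> r' Hr'.
    have [R1 O1 _ _] := invL r' Hv.
    rewrite /= R1 O1 /=; case: eqP => //; lia.
Qed.
End UB.

Fixpoint cprod (T : Type) (ls : seq (seq T)) : seq (seq T) :=
  if ls is l :: ls' then [seq x :: y | x <- l, y <- cprod ls'] else [:: [::]].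

Lemma size_cprod T (ls : seq (seq T)) :
  size (cprod ls) = foldr (fun l acc => size l * acc)%N 1%N ls.
Proof. by elim: ls => //= l ls <-; rewrite size_allpairs. Qed.

Lemma mem_cprod (T : eqType) (x0 : T) (ls : seq (seq T)) c : c \in cprod ls ->
  size c = size ls /\ forall j, (j < size ls)%N -> nth x0 c j \in nth [::] ls j.
Proof.
elim: ls c => [|l ls IH] c /=; first by rewrite inE => /eqP ->.
move=> /allpairsP [[x y] [Hx Hy ->]] /=.
have [S1 N1] := IH _ Hy; split; first by rewrite S1.
by case=> [|j] //= Hj; apply: N1.
Qed.

Lemma uniq_cprod (T : eqType) (ls : seq (seq T)) : all uniq ls -> uniq (cprod ls).
Proof.
elim: ls => [|l ls IH] //= /andP [Hl Ha].
apply: allpairs_uniq => //; first exact: IH.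
by move=> [x1 y1] [x2 y2] _ _ /= [-> ->].
Qed.

Section Fam.
Variables D m : nat.
Hypothesis HD : (0 < D)%N.
Hypothesis Hm : (0 < m)%N.

Definition pathnbr (i : nat) : seq nat :=
  (if i is i'.+1 then [:: i'] else [::]) ++
  (if (i.+1 < D)%N then [:: i.+1] else iota D m).
Definition Lm (j : nat) : seq nat := [seq x <- iota D m | x != D + j].
Definition Gc (c : seq (seq nat)) : pgraph :=
  mkseq (fun i => if (i < D)%N then pathnbr i else D.-1 :: nth [::] c (i - D)) (D + m).
Definition goodc (c : seq (seq nat)) : Prop :=
  size c = m /\ forall j, (j < m)%N -> perm_eq (nth [::] c j) (Lm j).
Definition adjb (u v : nat) : bool :=
  if (u < D)%N && (v < D)%N then (u == v.+1) || (v == u.+1)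
  else if (u < D)%N then u == D.-1
  else if (v < D)%N then v == D.-1
  else u != v.

Lemma adjbC u v : adjb u v = adjb v u.
Proof.
rewrite /adjb andbC; case: (u < D)%N; case: (v < D)%N => //=.
  by rewrite orbC.
by rewrite eq_sym.
Qed.

Lemma nbrGc c i : nbr (Gc c) i =
  if (i < D + m)%N then (if (i < D)%N then pathnbr i else D.-1 :: nth [::] c (i - D))
  else [::].
Proof.
rewrite /nbr /Gc; case: ifP => H; first by rewrite nth_mkseq.
by rewrite nth_default // size_mkseq leqNgt H.
Qed.

Lemma mem_Lm j x : (x \in Lm j) = [&& (D <= x)%N, (x < D + m)%N & x != D + j].
Proof. rewrite /Lm mem_filter mem_iota; case: (x != D + j); case: (D <= x)%N => //=; lia. Qed.

Lemma mem_nbr c u v : goodc c ->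
  (u \in nbr (Gc c) v) = [&& (v < D + m)%N, (u < D + m)%N & adjb v u].
Proof.
move=> [Hs Hp]; rewrite nbrGc.
case: (ltnP v (D + m)) => Hv; last by [].
rewrite /adjb.
case: (ltnP v D) => HvD /=.
  rewrite /pathnbr mem_cat.
  case: v Hv HvD => [|v] Hv HvD /=.
    case: ifP => H1; rewrite ?inE ?mem_iota; case: (ltnP u D) => HuD /=; lia.
  case: ifP => H1; rewrite ?inE ?mem_iota; case: (ltnP u D) => HuD /=; lia.
have Hj : (v - D < m)%N by lia.
rewrite inE (perm_mem (Hp _ Hj)) mem_Lm.
case: (ltnP u D) => HuD /=; lia.
Qed.

Lemma uniq_nbr c v : goodc c -> uniq (nbr (Gc c) v).
Proof.
move=> [Hs Hp]; rewrite nbrGc.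
case: ifP => Hv //; case: ifP => HvD.
  rewrite /pathnbr; case: v Hv HvD => [|v] Hv HvD.
    by case: ifP => _ //=; exact: iota_uniq.
  rewrite cat_uniq /=; case: ifP => H /=.
    by rewrite !inE; lia.
  rewrite iota_uniq andbT; apply/hasPn => x; rewrite mem_iota inE; lia.
have Hj : (v - D < m)%N by lia.
rewrite cons_uniq (perm_uniq (Hp _ Hj)) (perm_mem (Hp _ Hj)) mem_Lm.
rewrite /Lm filter_uniq ?iota_uniq // andbT; lia.
Qed.

Definition lev (x : nat) : nat := if (x < D)%N then x else D.

Lemma lev_nbr c a b : goodc c -> b \in nbr (Gc c) a -> (lev b <= (lev a).+1)%N.
Proof.
move=> Hc; rewrite mem_nbr // /adjb /lev.
case: (ltnP a D); case: (ltnP b D) => //=; lia.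
Qed.

Lemma within_lev c a b k : goodc c -> within (Gc c) a b k -> (lev b <= lev a + k)%N.
Proof.
move=> Hc; elim: k a => [|k IH] a /=; first by move/eqP ->; rewrite addn0.
move=> /orP [/IH H|/hasP [w Hw /IH H]]; first lia.
have := lev_nbr Hc Hw; lia.
Qed.

Lemma walk_up c i k : goodc c -> (i + k < D)%N -> within (Gc c) i (i + k) k.
Proof.
move=> Hc; elim: k => [|k IH] H; first by rewrite addn0 /= eqxx.
rewrite -addn1 addnA.
apply: within_trans; first by apply: IH; lia.
apply: within1; rewrite mem_nbr // /adjb; apply/and3P; split; try lia.
case: ifP => //; lia.
Qed.

Lemma walk_down c i k : goodc c -> (i + k < D)%N -> within (Gc c) (i + k) i k.
Proof.
move=> Hc; elim: k => [|k IH] H; first by rewrite addn0 /= eqxx.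
rewrite -addn1 addnA (addnC k 1).
apply: within_trans; last by apply: IH; lia.
apply: within1; rewrite mem_nbr // /adjb; apply/and3P; split; try lia.
case: ifP => //; lia.
Qed.

Lemma diam_le c u v : goodc c -> (u < D + m)%N -> (v < D + m)%N -> within (Gc c) u v D.
Proof.
move=> Hc Hu Hv.
case: (ltnP u D) => HuD; case: (ltnP v D) => HvD.
- case: (leqP u v) => Huv.
    have := walk_up Hc (i:=u) (k:=v-u) ltac:(lia).
    rewrite subnKC //; apply: within_mono; lia.
  have := walk_down Hc (i:=v) (k:=u-v) ltac:(lia).
  rewrite subnKC; [apply: within_mono; lia | lia].
- have H1 := walk_up Hc (i:=u) (k:=D.-1-u) ltac:(lia).
  have H2 : within (Gc c) (u + (D.-1 - u)) v 1.
    apply: within1; rewrite mem_nbr // /adjb; apply/and3P; split; try lia.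
    by repeat case: ifP; lia.
  have := within_trans H1 H2; apply: within_mono; lia.
- have H2 := walk_down Hc (i:=v) (k:=D.-1-v) ltac:(lia).
  have H1 : within (Gc c) u (v + (D.-1 - v)) 1.
    apply: within1; rewrite mem_nbr // /adjb; apply/and3P; split; try lia.
    by repeat case: ifP; lia.
  have := within_trans H1 H2; apply: within_mono; lia.
- case: (eqVneq u v) => [->|Huv]; first exact: within_refl.
  have H1 : within (Gc c) u v 1.
    apply: within1; rewrite mem_nbr // /adjb; apply/and3P; split; try lia.
    by repeat case: ifP; lia.
  apply: within_mono H1; lia.
Qed.

Lemma in_class_Gc c : goodc c -> in_class (D + m) D (Gc c).
Proof.
move=> Hc.
have Hsz : gsize (Gc c) = (D + m)%N by rewrite /gsize size_mkseq.
split => //.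
- split; last by exists D => u v; rewrite Hsz; exact: diam_le.
  move=> v; rewrite Hsz => Hv; split.
  + apply/allP => u Hu; move: Hu; rewrite mem_nbr //; lia.
  + exact: uniq_nbr.
  + rewrite mem_nbr // /adjb; apply/negP; by repeat case: ifP; lia.
  + by move=> u Hu; rewrite !mem_nbr // adjbC Hu Hv.
- split; first by move=> u v; rewrite Hsz; exact: diam_le.
  move=> D' HD'; exists 0%N, D; rewrite Hsz; split; try lia.
  apply/negP => /(within_lev Hc); rewrite /lev; by repeat case: ifP; lia.
Qed.

Lemma near_lt c u : goodc c -> within (Gc c) 0 u D.-1 -> (u < D)%N.
Proof.
move=> Hc /(within_lev Hc); rewrite /lev; by repeat case: ifP; lia.
Qed.

Lemma within_bound c a b k : goodc c -> within (Gc c) a b k -> (a < D + m)%N -> (b < D + m)%N.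
Proof.
move=> Hc; elim: k a => [|k IH] a /=; first by move/eqP ->.
move=> /orP [/IH //|/hasP [w Hw /IH H]] Ha.
by apply: H; move: Hw; rewrite mem_nbr //; lia.
Qed.

Lemma fam_locality Out (A : algo Out) c c' adv adv' r :
  goodc c -> goodc c' -> (r <= D)%N ->
  (forall u, (u < D + m)%N -> adv u = adv' u) ->
  state A (Gc c) adv r 0 = state A (Gc c') adv' r 0.
Proof.
move=> Hc Hc' Hr Ha.
apply: (@locality _ A _ _ adv adv' 0 D) => //.
- move=> u Hu; have HuD := near_lt Hc Hu; rewrite !nbrGc HuD; case: ifP => //.
- move=> u; rewrite /deg !nbrGc; case: ifP => // H1; case: ifP => // H2 /=.
  have Hj : (u - D < m)%N by lia.
  by rewrite (perm_size (Hc.2 _ Hj)) (perm_size (Hc'.2 _ Hj)).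
- move=> u Hu; apply: Ha; apply: (within_bound Hc Hu); lia.
- move=> u w Hu Hw; have HuD := near_lt Hc Hu.
  move: (Hw); rewrite mem_nbr // => /and3P [_ Hwn Ha'].
  rewrite !nbrGc Hwn; case: ifP => // HwD.
  move: Ha'; rewrite /adjb HuD HwD /= => /eqP ->.
  by rewrite /= eqxx.
Qed.

Definition choices : seq (seq (seq nat)) := cprod [seq permutations (Lm j) | j <- iota 0 m].

Lemma size_Lm j : (j < m)%N -> size (Lm j) = m.-1.
Proof.
move=> Hj; rewrite /Lm -(@rem_filter _ (D + j)) ?iota_uniq // size_rem ?size_iota //.
rewrite mem_iota; lia.
Qed.

Lemma uniq_Lm j : uniq (Lm j).
Proof. by rewrite /Lm filter_uniq ?iota_uniq. Qed.

Lemma choices_good c : c \in choices -> goodc c.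
Proof.
move=> /(mem_cprod [::]) [S N]; rewrite size_map size_iota in S N.
split => // j Hj.
have := N j Hj; rewrite (nth_map 0%N) ?size_iota // nth_iota // add0n.
by rewrite mem_permutations.
Qed.

Lemma fold_pow (l : seq nat) : (forall j, j \in l -> (j < m)%N) ->
  foldr (fun l acc => size l * acc)%N 1%N [seq permutations (Lm j) | j <- l]
  = ((m.-1)`! ^ size l)%N.
Proof.
elim: l => [|j l IH] H /=; first by rewrite expn0.
rewrite expnS IH; last by move=> k Hk; apply: H; rewrite inE Hk orbT.
rewrite size_permutations ?uniq_Lm // size_Lm //.
by apply: H; rewrite inE eqxx.
Qed.

Lemma size_choices : size choices = ((m.-1)`! ^ m)%N.
Proof.
rewrite /choices size_cprod fold_pow ?size_iota // => j.
by rewrite mem_iota.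
Qed.

Lemma Gc_inj c c' : goodc c -> goodc c' -> Gc c = Gc c' -> c = c'.
Proof.
move=> [S1 _] [S2 _] E.
apply: (@eq_from_nth _ [::]); first by rewrite S1 S2.
move=> j; rewrite S1 => Hj.
have := congr1 (fun G => behead (nbr G (D + j))) E.
rewrite /= !nbrGc (_ : (D + j < D + m)%N = true); last lia.
rewrite (_ : (D + j < D)%N = false); last lia.
by rewrite /= !addKn.
Qed.

Definition fam : seq pgraph := map Gc choices.

Lemma size_fam : size fam = ((m.-1)`! ^ m)%N.
Proof. by rewrite size_map size_choices. Qed.

Lemma uniq_fam : uniq fam.
Proof.
rewrite map_inj_in_uniq.
  apply: uniq_cprod; apply/allP => l /mapP [j _ ->]; exact: permutations_uniq.
move=> c c' Hc Hc'; apply: Gc_inj; exact: choices_good.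
Qed.

Lemma fam_class G : G \in fam -> in_class (D + m) D G.
Proof. by move=> /mapP [c Hc ->]; apply: in_class_Gc; exact: choices_good. Qed.

End Fam.

Lemma count_inj (T : eqType) (F : seq T) (P : T -> nat -> Prop) B :
  uniq F -> (forall x, x \in F -> exists k, (k < B)%N /\ P x k) ->
  (forall x y k, x \in F -> y \in F -> P x k -> P y k -> x = y) -> (size F <= B)%N.
Proof.
move=> U Ex Inj.
have [ps [E Hps]] : exists ps : seq (T * nat), map fst ps = F /\
    forall p, p \in ps -> [/\ p.1 \in F, (p.2 < B)%N & P p.1 p.2].
  elim: F U Ex {Inj} => [|x F IH] U Ex; first by exists [::].
  move: U => /= /andP [_ U].
  have [|ps [E Hps]] := IH U.
    by move=> y Hy; apply: Ex; rewrite inE Hy orbT.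
  have [k [Hk Pk]] := Ex x (mem_head _ _).
  exists ((x, k) :: ps); split; first by rewrite /= E.
  move=> p; rewrite inE => /orP [/eqP -> /=|/Hps [H1 H2 H3]]; first by split => //; exact: mem_head.
  by split => //; rewrite H1 orbT.
have Up : uniq ps by apply: (@map_uniq _ _ fst); rewrite E.
have Us : uniq (map snd ps).
  rewrite map_inj_in_uniq // => [[x1 k1] [x2 k2]] Q1 Q2 /= Ek; subst k2.
  have [A1 _ P1] := Hps _ Q1; have [A2 _ P2] := Hps _ Q2.
  by have /= -> := Inj _ _ _ A1 A2 P1 P2.
have -> : size F = size (map snd ps) by rewrite -E !size_map.
rewrite -(size_iota 0 B); apply: uniq_leq_size => // k /mapP [p Hp ->].
by have [_ ? _] := Hps _ Hp; rewrite mem_iota.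
Qed.

Definition bnat (b : seq bool) : nat := foldr (fun (x : bool) (acc : nat) => x + acc.*2)%N 1%N b.

Lemma bnat_lt b : (0 < bnat b < 2 ^ (size b).+1)%N.
Proof. elim: b => //= x b IH; rewrite expnS; case: x => /=; lia. Qed.

Lemma bnat_inj b1 b2 : bnat b1 = bnat b2 -> b1 = b2.
Proof.
elim: b1 b2 => [|x1 b1 IH] [|x2 b2] //=.
- have := bnat_lt b2; case: x2 => /=; lia.
- have := bnat_lt b1; case: x1 => /=; lia.
- move=> E.
  have Ex : x1 = x2 by move: E; case: x1; case: x2 => //=; lia.
  subst x2; congr (_ :: _); apply: IH; move: E; case: x1 => /=; lia.
Qed.

Definition vcode (R : nat) (xs : seq nat) : nat := foldr (fun x acc => x + R * acc)%N 0%N xs.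

Lemma vcode_lt R xs : all (fun x => x < R)%N xs -> (vcode R xs < R ^ size xs)%N.
Proof.
elim: xs => [|x xs IH] /=; first by rewrite expn0.
move=> /andP [Hx /IH H]; rewrite expnS; nia.
Qed.

Lemma vcode_inj R xs ys : size xs = size ys ->
  all (fun x => x < R)%N xs -> all (fun x => x < R)%N ys ->
  vcode R xs = vcode R ys -> xs = ys.
Proof.
elim: xs ys => [|x xs IH] [|y ys] //= [Hs] /andP [Hx Ax] /andP [Hy Ay] E.
have E1 : x = y.
  by have := congr1 (fun k => k %% R)%N E; rewrite !(addnC _ (R * _)) !(mulnC R) !modnMDl !modn_small.
subst y; congr (_ :: _); apply: IH => //.
have HR : (0 < R)%N by lia.
have E2 : (R * vcode R xs = R * vcode R ys)%N by lia.
by apply/eqP; rewrite -(eqn_pmul2l HR) E2.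
Qed.


Lemma two_digit N a b a' b' : (a < N)%N -> (a' < N)%N -> (a + N * b = a' + N * b')%N -> a = a' /\ b = b'.
Proof.
move=> Ha Ha' E.
have E1 := congr1 (fun k => k %% N)%N E.
rewrite /= !(addnC _ (N * _)) !(mulnC N) !modnMDl !modn_small // in E1.
subst a'; split => //.
have HN : (0 < N)%N by lia.
have E2 : (N * b = N * b')%N by lia.
by apply/eqP; rewrite -(eqn_pmul2l HN) E2.
Qed.

Lemma map_inj_lt (f : nat -> nat) n l1 l2 :
  (forall u v, (u < n)%N -> (v < n)%N -> f u = f v -> u = v) ->
  all (fun u => u < n)%N l1 -> all (fun u => u < n)%N l2 -> map f l1 = map f l2 -> l1 = l2.
Proof.
move=> Hf; elim: l1 l2 => [|x l1 IH] [|y l2] //= /andP [Hx A1] /andP [Hy A2] [E1 E2].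
by rewrite (Hf _ _ Hx Hy E1) (IH _ A1 A2 E2).
Qed.

Lemma map_iota_eq (f g : nat -> nat) n : map f (iota 0 n) = map g (iota 0 n) ->
  forall u, (u < n)%N -> f u = g u.
Proof.
move=> E u Hu; have := congr1 (fun l => nth 0%N l u) E.
by rewrite /= !(nth_map 0%N) ?size_iota // nth_iota.
Qed.

Section LB.
Variables D m s : nat.
Hypothesis HD : (0 < D)%N.
Hypothesis Hm : (0 < m)%N.
Hypothesis Hsuf : sufficient_anon (D + m) D D s.

Let n := (D + m)%N.
Let R1 := (2 ^ s.+1)%N.
Definition code (adv : advice) (f : nat -> nat) : nat :=
  (vcode n (map f (iota 0 n)) + n ^ n * vcode R1 (map (fun u => bnat (adv u)) (iota 0 n)))%N.

Lemma lb_count : (size (fam D m) <= n ^ n * R1 ^ n)%N.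
Proof.
have [A HA] := Hsuf.
pose P (G : pgraph) (k : nat) := exists adv H f,
  [/\ advice_size_le G adv s, outputs_within A G adv D 0 H, iso_map G H f & k = code adv f].
apply: (@count_inj _ _ P); first exact: uniq_fam.
- move=> G HG.
  have Hc := fam_class HD Hm HG.
  have [adv [Hs Hsol]] := HA G Hc.
  have [_ Hsz _] := Hc.
  have [H [Ho [f Hf]]] := Hsol 0%N ltac:(rewrite Hsz; lia).
  exists (code adv f); split; last by exists adv, H, f.
  have [Hsz' Hfl _ _] := Hf.
  have La : (vcode n (map f (iota 0 n)) < n ^ n)%N.
    have := @vcode_lt n (map f (iota 0 n)); rewrite size_map size_iota; apply.
    apply/allP => x /mapP [u]; rewrite mem_iota => Hu ->.
    by have := Hfl u; rewrite -Hsz' Hsz; apply; lia.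
  have Lb : (vcode R1 (map (fun u => bnat (adv u)) (iota 0 n)) < R1 ^ n)%N.
    have := @vcode_lt R1 (map (fun u => bnat (adv u)) (iota 0 n)); rewrite size_map size_iota; apply.
    apply/allP => x /mapP [u]; rewrite mem_iota => Hu ->.
    have := bnat_lt (adv u); have := Hs u ltac:(rewrite Hsz; lia).
    rewrite /R1 => H1 /andP [_ H2]; apply: (leq_trans H2); rewrite leq_exp2l //.
  rewrite /code; nia.
- move=> G G' k /mapP [c Hc ->] /mapP [c' Hc' ->] [adv [H [f [Hs Ho Hf ->]]]] [adv' [H' [f' [Hs' Ho' Hf' Ek]]]].
  have Gd := choices_good Hc; have Gd' := choices_good Hc'.
  have Szc : gsize (Gc D m c) = n by rewrite /gsize size_mkseq.
  have Szc' : gsize (Gc D m c') = n by rewrite /gsize size_mkseq.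
  have [Hsz1 Hfl Hfi Hfn] := Hf.
  have [Hsz2 Hfl' Hfi' Hfn'] := Hf'.
  have Lf : forall g, iso_map (Gc D m c) H g \/ iso_map (Gc D m c') H' g ->
      all (fun x => x < n)%N (map g (iota 0 n)).
    move=> g [[E1 E2 _ _]|[E1 E2 _ _]]; apply/allP => x /mapP [u];
    rewrite mem_iota => Hu ->.
      by rewrite -Szc E1; apply: E2; lia.
    by rewrite -Szc' E1; apply: E2; lia.
  have La := vcode_lt (Lf f (or_introl Hf)); have La' := vcode_lt (Lf f' (or_intror Hf')).
  rewrite !size_map !size_iota in La La'.
  have Lb : forall a : advice, advice_size_le (Gc D m c) a s \/ advice_size_le (Gc D m c') a s ->
      all (fun x => x < R1)%N (map (fun u => bnat (a u)) (iota 0 n)).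
    move=> a Ha; apply/allP => x /mapP [u]; rewrite mem_iota => Hu ->.
    have Hsu : (size (a u) <= s)%N.
      by case: Ha => Ha; apply: Ha; rewrite ?Szc ?Szc'; lia.
    have := bnat_lt (a u); rewrite /R1 => /andP [_ H2]; apply: (leq_trans H2); rewrite leq_exp2l //.
  have [E1 E2] := two_digit La La' Ek.
  have Ef0 : map f (iota 0 n) = map f' (iota 0 n).
    by apply: (vcode_inj _ (Lf f (or_introl Hf)) (Lf f' (or_intror Hf')) E1); rewrite !size_map.
  have Ef := map_iota_eq Ef0.
  have Ea1 : map (fun u => bnat (adv u)) (iota 0 n) = map (fun u => bnat (adv' u)) (iota 0 n).
    by apply: (vcode_inj _ (Lb _ (or_introl Hs)) (Lb _ (or_intror Hs')) E2); rewrite !size_map.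
  have Ea0 := map_iota_eq Ea1.
  have Ea : forall u, (u < n)%N -> adv u = adv' u by move=> u Hu; apply: bnat_inj; apply: Ea0.
  have EH : H = H'.
    apply: (outputs_det _ Ho Ho') => r Hr.
    by rewrite (fam_locality HD Hm A Gd Gd' Hr Ea).
  subst H'.
  apply: (@eq_from_nth _ [::]); first by rewrite /gsize in Szc Szc'; rewrite Szc Szc'.
  move=> u; rewrite (_ : size (Gc D m c) = n) // => Hu.
  have Hu1 : (u < gsize (Gc D m c))%N by rewrite Szc.
  have Hu2 : (u < gsize (Gc D m c'))%N by rewrite Szc'.
  have Hall : forall cc, goodc D m cc -> all (fun x => x < n)%N (nbr (Gc D m cc) u).
    move=> cc Hcc; apply/allP => x; rewrite mem_nbr //; rewrite /n; lia.
  change (nbr (Gc D m c) u = nbr (Gc D m c') u).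
  apply: (@map_inj_lt f n).
  - move=> a b Ha Hb; apply: Hfi; rewrite Szc; lia.
  - exact: Hall.
  - exact: Hall.
  - rewrite Hfn // (Ef u Hu) -Hfn' //.
    apply/eq_in_map => x Hx; symmetry; apply: Ef.
    by have := allP (Hall _ Gd') x Hx.
Qed.
End LB.

Lemma fact_aux a b : (a ^ b * a`! <= (a + b)`!)%N.
Proof.
elim: b => [|b IH]; first by rewrite expn0 mul1n addn0.
rewrite expnS addnS factS -mulnA.
apply: leq_mul; first lia.
exact: IH.
Qed.

Lemma fact_lb2 h b : (h <= b)%N -> (h ^ h <= (h + b)`!)%N.
Proof.
case: h => [|h] Hb; first by rewrite expn0 fact_gt0.
apply: leq_trans (fact_aux _ _).
apply: (@leq_trans (h.+1 ^ b)); first by apply: leq_pexp2l.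
exact: leq_pmulr (fact_gt0 _).
Qed.

Lemma fact_lb k : ((k./2) ^ (k./2) <= k`!)%N.
Proof.
have Hk : (k = k./2 + (k - k./2))%N by lia.
rewrite [X in (_ <= X`!)%N]Hk; apply: fact_lb2; lia.
Qed.

Lemma INR_addn a b : INR (a + b)%N = Rplus (INR a) (INR b).
Proof. by rewrite -plusE plus_INR. Qed.
Lemma INR_muln a b : INR (a * b)%N = Rmult (INR a) (INR b).
Proof. by rewrite -multE mult_INR. Qed.
Lemma INR_expn a k : INR (a ^ k)%N = pow (INR a) k.
Proof. elim: k => [|k IH]; first by rewrite expn0. by rewrite expnS INR_muln IH. Qed.
Lemma INR_leq a b : (a <= b)%N -> Rle (INR a) (INR b).
Proof. by move/leP; apply: le_INR. Qed.
Lemma INR_leq_inv a b : Rle (INR a) (INR b) -> (a <= b)%N.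
Proof. by move/INR_le/leP. Qed.

Section Reals.
Local Open Scope R_scope.

Lemma lb_real (b N H M S lN lH l2 : R) : 0 < b -> b <= 1 -> 32 <= N * b * b ->
  b * N <= M -> M - 2 <= 2 * H -> 0 < l2 -> l2 <= lN -> lN <= 2 * lH ->
  H * M * lH <= N * lN + (S + 1) * N * l2 -> (b * b / 16) * (N * (lN / l2)) <= S.
Proof.
move=> Hb0 Hb1 HN HM HH Hl2 HlN HlH Hmain.
have HbN : 32 <= b * N by nra.
have HN0 : 0 < N by nra.
have HH4 : b * N / 4 <= H by lra.
have HlH2 : lN / 2 <= lH by lra.
have P1 : (b * N / 4) * (b * N) <= H * M.
  apply: Rmult_le_compat; lra.
have P2 : (b * N / 4) * (b * N) * (lN / 2) <= H * M * lH.
  apply: Rmult_le_compat; try lra; nra.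
have P3 : b * b * N * lN / 8 <= lN + (S + 1) * l2.
  have : N * (b * b * N * lN / 8) <= N * (lN + (S + 1) * l2) by nra.
  move/Rmult_le_reg_l; apply; lra.
have P4 : 2 * lN <= b * b * N * lN / 16 by nra.
have P5 : b * b * N * lN / 16 <= S * l2 by nra.
have -> : b * b / 16 * (N * (lN / l2)) = (b * b * N * lN / 16) / l2 by field; lra.
apply: (Rmult_le_reg_r l2) => //.
rewrite /Rdiv Rmult_assoc Rinv_l; lra.
Qed.

Lemma ln_le x y : 0 < x -> x <= y -> ln x <= ln y.
Proof.
move=> Hx [Hxy|->]; last by right.
by left; apply: ln_increasing.
Qed.

Lemma ln2_pos : 0 < ln 2.
Proof. have := ln_lt_2; lra. Qed.

Lemma ub_real n : (2 <= n)%N -> INR (wl n * (n + 4) + 1) <= 16 * nlogn n.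
Proof.
move=> Hn.
set t := trunc_log 2 n.
have Ht : (2 ^ t <= n)%N by apply: trunc_logP; lia.
have HN : 2 <= INR n by have := INR_leq Hn.
have HT : INR t * ln 2 <= ln (INR n).
  rewrite -ln_pow; last lra.
  apply: ln_le; first by apply: pow_lt; lra.
  by rewrite -(INR_expn 2 t) /=; apply: INR_leq.
have Hl2 := ln2_pos.
have HL1 : ln 2 <= ln (INR n) by apply: ln_le; lra.
set L := ln (INR n) / ln 2.
have HTL : INR t <= L.
  rewrite /L; apply: (Rmult_le_reg_r (ln 2)) => //.
  rewrite /Rdiv Rmult_assoc Rinv_l; lra.
have HL : 1 <= L.
  rewrite /L; apply: (Rmult_le_reg_r (ln 2)) => //.
  rewrite /Rdiv Rmult_assoc Rinv_l; lra.
rewrite /nlogn -/L /wl INR_addn INR_muln INR_addn S_INR /=.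
have Ht0 : 0 <= INR t by apply: pos_INR.
rewrite /= in Ht0 *.
rewrite -/t.
have H1 : (INR t + 1) * (INR n + (1 + 1 + 1 + 1)) <= (L + 1) * (INR n + 4).
  apply: Rmult_le_compat; lra.
nra.
Qed.
End Reals.
Local Open Scope R_scope.

Theorem corollary5p5 :
  forall alpha : R, 0 < alpha < 1 ->
  exists c1 c2 : R, 0 < c1 /\ 0 < c2 /\
  exists n0 : nat, forall n D : nat,
    (n0 <= n)%N -> (1 <= D)%N -> INR D <= alpha * INR n ->
    (exists s : nat, INR s <= c2 * nlogn n /\ sufficient_lab n D D s) /\
    (forall s : nat, sufficient_anon n D D s -> c1 * nlogn n <= INR s).
Proof.
move=> alpha [Ha0 Ha1].
set b := 1 - alpha.
have Hb0 : 0 < b by rewrite /b; lra.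
have Hb1 : b <= 1 by rewrite /b; lra.
exists (b * b / 16), 16; split; first by nra.
split; first lra.
have [Hup _] := archimed (32 / (b * b)).
have Hbb : 0 < b * b by nra.
have H32 : 0 < 32 / (b * b) by apply: Rdiv_lt_0_compat; lra.
have Hz : (0 <= up (32 / (b * b)))%Z by apply: le_IZR; lra.
exists (Z.to_nat (up (32 / (b * b)))) => n D Hn0 HD1 HDn.
have HN : 32 / (b * b) <= INR n.
  have := INR_leq Hn0; rewrite INR_IZR_INZ Z2Nat.id //; lra.
have HNbb : 32 <= INR n * b * b.
  have : 32 / (b * b) * (b * b) <= INR n * (b * b) by apply: Rmult_le_compat_r; lra.
  rewrite /Rdiv Rmult_assoc Rinv_l; lra.
have HN32 : 32 <= INR n.
  have Hbb1 : b * b <= 1 by nra.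
  have : INR n * (b * b) <= INR n * 1 by apply: Rmult_le_compat_l => //; apply: pos_INR.
  have := HNbb; rewrite Rmult_assoc; lra.
have Hn2 : (2 <= n)%N by apply: INR_leq_inv => /=; lra.
have HbN : 32 <= b * INR n.
  have : INR n * b * b <= INR n * b * 1.
    apply: Rmult_le_compat_l => //; apply: Rmult_le_pos; [apply: pos_INR|lra].
  lra.
have Ebn : b * INR n = INR n - alpha * INR n by rewrite /b; ring.
have HDlt : (D < n)%N.
  apply: INR_leq_inv; rewrite S_INR; lra.
split.
- exists (wl n * (n + 4) + 1)%N; split; first exact: ub_real.
  exists LA => G [[Hwf Hconn] Hsz [Hdiam _]].
  have Hall : forall v, (v < n)%N -> all (fun u => u < n)%N (nbr G v).
    by move=> v Hv; have [] := Hwf v ltac:(rewrite Hsz; lia); rewrite Hsz.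
  exists (advL n D G); split; last first.
    apply: solvesL => //; first lia.
    by move=> u v Hu Hv; apply: Hdiam; rewrite Hsz.
  move=> v; rewrite Hsz => Hv.
  rewrite /advL size_enc size_cat /=.
  have Hdeg : (size (nbr G v) <= n)%N.
    have [_ Hu _ _] := Hwf v ltac:(rewrite Hsz; lia).
    rewrite -(size_iota 0 n); apply: uniq_leq_size => // u Hu'.
    by rewrite mem_iota; have := allP (Hall v Hv) u Hu'; lia.
  nia.
- move=> s Hs.
  set m := (n - D)%N.
  have Enm : n = (D + m)%N by rewrite /m; lia.
  rewrite Enm in Hs.
  have Hm1 : (0 < m)%N by rewrite /m; lia.
  have Hc := lb_count HD1 Hm1 Hs.
  rewrite size_fam // in Hc.
  have Hc' : ((m.-1)`! ^ m <= n ^ n * (2 ^ s.+1) ^ n)%N by rewrite Enm.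
  set h := (m.-1)./2.
  have Hh : (h ^ (h * m) <= n ^ n * 2 ^ (s.+1 * n))%N.
    rewrite expnM expnM; apply: leq_trans Hc'.
    by rewrite leq_exp2r // fact_lb.
  have HM : b * INR n <= INR m.
    have := INR_addn D m; rewrite -Enm; rewrite /b; nra.
  have HMH : INR m - 2 <= 2 * INR h.
    have : (m <= 2 * h + 2)%N by rewrite /h; lia.
    move/INR_leq; rewrite INR_addn INR_muln /=; lra.
  have HH1 : 1 <= INR h by nra.
  have HHpos : 0 < INR h by lra.
  have HNpos : 0 < INR n by lra.
  have Hln := INR_leq Hh.
  rewrite INR_expn INR_muln !INR_expn in Hln.
  have Hln2 := ln_le (pow_lt _ _ HHpos) Hln.
  rewrite ln_mult in Hln2; try (apply: pow_lt; rewrite /=; lra).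
  rewrite !ln_pow /= in Hln2; try lra.
  rewrite INR_muln INR_muln S_INR in Hln2.
  have Hl2 := ln2_pos.
  have HlN : ln 2 <= ln (INR n) by apply: ln_le; lra.
  have HlH : ln (INR n) <= 2 * ln (INR h).
    rewrite -(ln_pow _ HHpos 2) /=; apply: ln_le => //; nra.
  rewrite /nlogn.
  apply: (lb_real (b:=b) (N:=INR n) (H:=INR h) (M:=INR m) (lH:=ln (INR h))) => //.
Qed.
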